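(* Let $U_2$ be a unitary matrix with real entries having a unique (up to scalars) eigenvector $|\phi_0\rangle$ of eigenvalue $1$, chosen with real entries and norm $1$; let $|\mu\rangle$ be a unit vector with real entries, $U_1=I-2|\mu\rangle\langle\mu|$, $U=U_2U_1$, $|\tilde\phi_0\rangle=|\phi_0\rangle-\langle\mu|\phi_0\rangle|\mu\rangle$, and $\varepsilon\in(0,1)$. Assume that all eigenvalues $e^{i\alpha}$ of $U$ satisfy $|\alpha|\le\pi/2$. Then for every $T\ge\mathsf{QHT}_\varepsilon(U_2,|\mu\rangle)$, the procedure $\mathbf{Rotate}(U,1/T,\varepsilon)$ maps $|\tilde\phi_0\rangle$ to a state at Euclidean distance $O(\sqrt{\varepsilon})$ from the $U$-rotation of $|\tilde\phi_0\rangle$. Moreover, the number of applications of $\text{c-}U$ is $O(\log(1/\varepsilon)\cdot T)$.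
   Context: Decompose $|\tilde\phi_0\rangle=\delta_0|w_0\rangle+\sum_{1\le j\le J}\delta_j(|w_j^+\rangle+|w_j^-\rangle)+\delta_{-1}|w_{-1}\rangle$ with real coefficients, where $|w_0\rangle$ (resp. $|w_{-1}\rangle$) is a unit eigenvector of $U$ of eigenvalue $1$ (resp. $-1$) and $|w_j^\pm\rangle$ are unit eigenvectors of eigenvalues $e^{\pm i\alpha_j}$, $0<\alpha_j<\pi$, $|w_j^-\rangle=\overline{|w_j^+\rangle}$. The $U$-rotation of $|\tilde\phi_0\rangle$ is $\delta_0|w_0\rangle+\sum_j\delta_j(|w_j^+\rangle-|w_j^-\rangle)+\delta_{-1}|w_{-1}\rangle$. $\mathit{QH}$ takes value $1/\alpha_j$ with probability $2\delta_j^2$, $1/\pi$ with probability $\delta_{-1}^2$, and $0$ otherwise; $\mathsf{QHT}_\varepsilon(U_2,|\mu\rangle)=\min\{y:\Pr[\mathit{QH}>y]\le\varepsilon\}$. $\mathbf{Estimate}$ is the standard phase estimation circuit for $U$ with precision $\Delta$ (on an eigenvector with eigenphase $\alpha\in(-\pi,\pi]$ it outputs $\alpha$ within $\Delta$ with error probability at most $1/3$, outputs $0$ with certainty on $1$-eigenvectors, and uses $O(1/\Delta)$ calls to $\text{c-}U$ and its inverse). $\mathbf{Rotate}(U,\Delta,\varepsilon)$ on input $|\psi\rangle$: (1) apply $\Theta(\log(1/\varepsilon))$ times $\mathbf{Estimate}$ for $U$ with precision $\Delta$ to the same state $|\psi\rangle$ (fresh registers each time); (2) if the majority of estimated phases are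 negative, multiply the state by $-1$ (phase flip), otherwise do nothing; (3) undo the phase estimations of step (1). *)

(* Defs.v *)
From HB Require Import structures.
From mathcomp Require Import all_boot all_order all_algebra.
From mathcomp Require Import all_classical all_reals all_analysis.
From mathcomp Require Import complex.
Set Implicit Arguments. Unset Strict Implicit. Unset Printing Implicit Defensive.
Import Order.TTheory GRing.Theory Num.Theory.
Local Open Scope ring_scope.

Section QRotate.
Variable R : realType.
Local Notation C := (R[i]).

Definition rc (x : R) : C := Complex x 0.
Definition cmx m n (A : 'M[R]_(m, n)) : 'M[C]_(m, n) := map_mx rc A.

Definition adjmx m n (A : 'M[C]_(m, n)) : 'M[C]_(n, m) := (map_mx (@conjc R) A)^T.

Definition sqmod (z : C) : R := complex.Re z ^+ 2 + complex.Im z ^+ 2.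
Definition vnorm2 n (v : 'cV[C]_n) : R := \sum_(i < n) sqmod (v i 0).

Definition expi (a : R) : C := Complex (cos a) (sin a).

Definition householder n (mu : 'cV[R]_n) : 'M[R]_n := 1%:M - 2 *: (mu *m mu^T).

Definition phi_tilde n (phi0 mu : 'cV[R]_n) : 'cV[R]_n :=
  phi0 - (mu^T *m phi0) 0 0 *: mu.

Definition spectral_decomp n (U V : 'M[C]_n) (theta : 'I_n -> R) : Prop :=
  [/\ adjmx V *m V = 1%:M,
      (forall k, - pi < theta k <= pi) &
      U = V *m diag_mx (\row_k expi (theta k)) *m adjmx V].

Definition coords n (V : 'M[C]_n) (v : 'cV[C]_n) : 'cV[C]_n := adjmx V *m v.

(* Pr[QH > y]: QH takes value 1/|theta_k| (i.e. 1/alpha_j for the phases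
   +-alpha_j, 1/pi for the phase pi) with the weight of v on the corresponding
   eigenvector, and 0 otherwise (total mass 1). *)
Definition QH_tail n (V : 'M[C]_n) (theta : 'I_n -> R) (v : 'cV[C]_n) (y : R) : R :=
  if y < 0 then 1
  else \sum_(k < n | (theta k != 0) && (y < `|theta k|^-1)) sqmod (coords V v k 0).

(* QHT_eps = min { y | Pr[QH > y] <= eps } (the set is an up-closed ray with
   attained minimum, so its infimum is that minimum) *)
Definition QHT n (V : 'M[C]_n) (theta : 'I_n -> R) (v : 'cV[C]_n) (eps : R) : R :=
  inf [set y : R | QH_tail V theta v y <= eps].

Definition U_rotation n (V : 'M[C]_n) (theta : 'I_n -> R) (v : 'cV[C]_n) : 'cV[C]_n :=
  V *m diag_mx (\row_k (if theta k < 0 then -1 else 1)) *m coords V v.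

(* Phase estimation, outcome-m branch: the standard circuit maps
   |w>|0> to |w> (sum_m amp(alpha, m) |m>) for every eigenvector w of U of
   eigenphase alpha, i.e. its outcome-m branch operator is the function of U
   V diag(amp(theta_k, m)) V^*. *)
Definition est_op n (V : 'M[C]_n) (theta : 'I_n -> R) (O : finType)
  (amp : R -> O -> C) (m : O) : 'M[C]_n :=
  V *m diag_mx (\row_k amp (theta k) m) *m adjmx V.

(* state after k phase estimations on fresh registers, component on the
   outcome tuple t (the joint state lives in C^n (x) C^(O^k)) *)
Definition est_state n (V : 'M[C]_n) (theta : 'I_n -> R) (O : finType)
  (amp : R -> O -> C) k (v : 'cV[C]_n) (t : k.-tuple O) : 'cV[C]_n :=
  foldl (fun w m => est_op V theta amp m *m w) v t.

Definition majority_neg (O : finType) (est : O -> R) k (t : k.-tuple O) : bool :=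
  (k < 2 * count (fun m => (est m < 0)%R) t)%N.

(* Euclidean distance between the output of Rotate on v (with all k+k
   ancilla registers) and target (x) |0...0>.  Rotate = W^-1 S W where W is the
   (unitary) k-fold phase estimation and S the majority phase flip; by
   unitarity of W^-1, || W^-1 S W (v(x)0) - target(x)0 || = || S W(v(x)0) - W(target(x)0) ||,
   and W(x (x) 0) = sum_t est_state x t (x) |t>. *)
Definition rotate_error n (V : 'M[C]_n) (theta : 'I_n -> R) (O : finType)
  (est : O -> R) (amp : R -> O -> C) k (v target : 'cV[C]_n) : R :=
  Num.sqrt (\sum_(t : k.-tuple O)
     vnorm2 ((if majority_neg est t then -1 else 1) *: est_state V theta amp v t
             - est_state V theta amp target t)).

(* number of applications of c-U (or its inverse) by Rotate: k estimations
   and k undone estimations, each using [calls] applications *)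
Definition rotate_calls (k calls : nat) : nat := (2 * k * calls)%N.

End QRotate.

(* Main.v *)
Require Import Defs.
From HB Require Import structures.
From mathcomp Require Import all_boot all_order all_algebra.
From mathcomp Require Import all_classical all_reals all_analysis.
From mathcomp Require Import complex.
From mathcomp Require Import ring lra zify.
From Stdlib Require Import Lia.
Import Order.TTheory GRing.Theory Num.Theory.
Local Open Scope ring_scope.

Section A.
Variable R : realType.

Lemma sum_tuple_prod (O : finType) (g : O -> R) k :
  \sum_(t : k.-tuple O) \prod_(m <- t) g m = (\sum_m g m) ^+ k.
Proof.
elim: k => [|k IH].
  rewrite expr0 (big_pred1 [tuple]) ?big_nil // => t; rewrite inE; have -> := tuple0 t; by rewrite eqxx.
pose f := fun p : O * k.-tuple O => [tuple of p.1 :: p.2].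
pose h := fun t : k.+1.-tuple O => (thead t, [tuple of behead t]).
have fK : cancel f h by case=> x t; rewrite /f /h /=; congr (_, _); apply: val_inj.
have hK : cancel h f by move=> t; rewrite /f /h; apply: val_inj => /=; case: t => [[|x s] //=].
rewrite (reindex f) /=; last by exists h => ? _.
rewrite -(pair_big xpredT xpredT (fun x (t : k.-tuple O) => \prod_(m <- [tuple of x :: t]) g m)) /=.
rewrite exprS big_distrl /=; apply: eq_bigr => x _.
rewrite -IH big_distrr /=; apply: eq_bigr => t _.
by rewrite big_cons.
Qed.
End A.


Section A.
Variable R : realType.
Local Notation C := (R[i]).

Lemma sqmodM (a b : C) : sqmod (a*b) = sqmod a * sqmod b.
Proof. case: a => a1 a2; case: b => b1 b2; rewrite /sqmod /=. ring. Qed.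
Lemma sqmod_ge0 (a : C) : 0 <= sqmod a.
Proof. by rewrite /sqmod addr_ge0 // sqr_ge0. Qed.
Lemma conjc_sq (a : C) : conjc a * a = rc (sqmod a).
Proof. case: a => a1 a2; rewrite /sqmod /rc /=; congr Complex; ring. Qed.
Lemma rcD (a b : R) : rc (a + b) = rc a + rc b.
Proof. exact: (raddfD (@real_complex R)). Qed.
Lemma rc0 : rc 0 = 0 :> C. Proof. by []. Qed.
Lemma rc_inj : injective (@rc R). Proof. by move=> a b [] . Qed.

Lemma adjmxM m n p (A : 'M[C]_(m,n)) (B : 'M[C]_(n,p)) :
  adjmx (A *m B) = adjmx B *m adjmx A.
Proof. by rewrite /adjmx map_mxM trmx_mul. Qed.
Lemma adjmxK m n (A : 'M[C]_(m,n)) : adjmx (adjmx A) = A.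
Proof. apply/matrixP => i j; rewrite /adjmx !mxE. by rewrite conjcK. Qed.

Lemma vnorm2E n (y : 'cV[C]_n) : (adjmx y *m y) 0 0 = rc (vnorm2 y).
Proof.
rewrite mxE /vnorm2 (big_morph (@rc R) rcD rc0); apply: eq_bigr => i _.
by rewrite /adjmx !mxE conjc_sq.
Qed.

Lemma vnorm2_iso n (A : 'M[C]_n) (y : 'cV[C]_n) :
  adjmx A *m A = 1%:M -> vnorm2 (A *m y) = vnorm2 y.
Proof.
move=> HA; apply: rc_inj; rewrite -!vnorm2E adjmxM -mulmxA (mulmxA (adjmx A)).
by rewrite HA mul1mx.
Qed.
End A.


Section B.
Variable R : realType.

Lemma sum_sub (I : finType) (P Q : pred I) (F : I -> R) :
  (forall i, 0 <= F i) -> (forall i, P i -> Q i) ->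
  \sum_(i | P i) F i <= \sum_(i | Q i) F i.
Proof.
move=> F0 PQ; rewrite [X in _ <= X]big_mkcond [X in X <= _]big_mkcond.
apply: ler_sum => i _; case: ifP => Pi; first by rewrite (PQ i Pi).
by case: ifP.
Qed.

Lemma prod_f (O : finType) (bad : pred O) (s : seq O) :
  \prod_(m <- s) ((2/3 : R) * (if bad m then 9/4 else 1))
  = (2/3) ^+ size s * (9/4) ^+ count bad s.
Proof.
elim: s => [|m s IH]; first by rewrite big_nil !expr0 mulr1.
rewrite big_cons IH /=; case: (bad m) => /=; rewrite ?add0n !exprS.
- ring.
- ring.
Qed.

Lemma chernoff (O : finType) (p : O -> R) (bad : pred O) k :
  (forall m, 0 <= p m) -> \sum_m p m = 1 -> \sum_(m | bad m) p m <= 1/3 ->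
  \sum_(t : k.-tuple O | (k <= 2 * count bad t)%N) \prod_(m <- t) p m
    <= (17/18) ^+ k.
Proof.
move=> p0 p1 pb.
pose f := fun m : O => (2/3 : R) * (if bad m then 9/4 else 1).
have f0 : forall m, 0 <= f m by move=> m; rewrite /f; case: (bad m); lra.
apply: (@le_trans _ _ (\sum_(t : k.-tuple O) \prod_(m <- t) (p m * f m))).
  apply: (@le_trans _ _ (\sum_(t : k.-tuple O | (k <= 2 * count bad t)%N) \prod_(m <- t) (p m * f m))); last first.
    rewrite [X in _ <= X](bigID (fun t : k.-tuple O => (k <= 2 * count bad t)%N)) /= lerDl.
    by apply: sumr_ge0 => t _; apply: prodr_ge0 => m _; apply: mulr_ge0.
  apply: ler_sum => t Ht; rewrite big_split /=.
  rewrite -[X in X <= _]mulr1; apply: ler_wpM2l; first exact: prodr_ge0.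
  rewrite /f prod_f size_tuple.
  have -> : (9/4 : R) = (3/2) ^+ 2 by rewrite expr2; lra.
  rewrite -exprM.
  apply: (@le_trans _ _ ((2/3) ^+ k * (3/2) ^+ k)).
    by rewrite -exprMn (_ : 2/3 * (3/2) = 1 :> R) ?expr1n //; lra.
  apply: ler_wpM2l; first by apply: exprn_ge0; lra.
  by rewrite (ler_eXn2l (_ : 1 < 3/2)) //; lra.
rewrite sum_tuple_prod; apply: lerXn2r.
- by rewrite ?inE; apply: sumr_ge0 => m _; exact: mulr_ge0.
- by rewrite nnegrE; lra.
have -> : \sum_m p m * f m = 2/3 * (\sum_m p m + 5/4 * \sum_(m | bad m) p m).
  rewrite (eq_bigr (fun m => 2/3 * (p m + 5/4 * (if bad m then p m else 0)))).
    by rewrite -mulr_sumr big_split /= -mulr_sumr -big_mkcond.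
  by move=> m _; rewrite /f; case: (bad m); lra.
lra.
Qed.
End B.


Section C.
Variable R : realType.
Local Notation C := (R[i]).

Lemma sqmod1 : sqmod (1 : C) = 1.
Proof. rewrite /sqmod /=; lra. Qed.

Lemma sqmod_prod (I : Type) (s : seq I) (F : I -> C) :
  sqmod (\prod_(m <- s) F m) = \prod_(m <- s) sqmod (F m).
Proof. exact: (big_morph _ (@sqmodM R) sqmod1). Qed.

Lemma sign_sq (b1 b2 : bool) :
  sqmod ((if b1 then -1 else 1) - (if b2 then -1 else 1) : C) = if b1 == b2 then 0 else 4.
Proof. by case: b1; case: b2; rewrite /sqmod /=; lra. Qed.

Variables (O : finType) (est : O -> R) (amp : R -> O -> C) (T : R) (k : nat).

Definition Sj (a : R) : R :=
  \sum_(t : k.-tuple O) sqmod (\prod_(m <- t) amp a m) *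
     sqmod ((if majority_neg est t then -1 else 1) - (if a < 0 then -1 else 1) : C).

Hypothesis Hamp : forall a : R, \sum_(m : O) sqmod (amp a m) = 1.

Lemma Sj_le4 a : Sj a <= 4.
Proof.
apply: (@le_trans _ _ (\sum_(t : k.-tuple O) \prod_(m <- t) sqmod (amp a m) * 4)).
  apply: ler_sum => t _; rewrite sqmod_prod; apply: ler_wpM2l.
    by apply: prodr_ge0 => m _; exact: sqmod_ge0.
  by rewrite sign_sq; case: eqP => _; lra.
by rewrite -mulr_suml sum_tuple_prod Hamp expr1n mul1r.
Qed.

Hypothesis Hamp0 : forall m : O, est m != 0 -> amp 0 m = 0.

Lemma Sj_0 : Sj 0 = 0.
Proof.
apply: big1 => t _.
case: (boolP (has (fun m => est m != 0) t)) => [/hasP [m mt hm]|hn].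
  have /eqP -> : \prod_(m <- t) amp 0 m == 0.
    by rewrite prodf_seq_eq0; apply/hasP; exists m => //=; rewrite Hamp0 ?eqxx.
  by rewrite /sqmod /= expr0n /= addr0 mul0r.
have -> : majority_neg est t = false.
  rewrite /majority_neg; apply/negbTE; rewrite -leqNgt.
  have -> : count (fun m => est m < 0) t = 0%N.
    rewrite -(count_pred0 t); apply: eq_in_count => m mt /=.
    have : ~~ (est m != 0) by apply: contra hn => hm; apply/hasP; exists m.
    by rewrite negbK => /eqP ->; rewrite ltxx.
  by [].
by rewrite ltxx subrr /sqmod /= expr0n /= addr0 mulr0.
Qed.
End C.

Section D.
Variable R : realType.
Local Notation C := (R[i]).
Variables (O : finType) (est : O -> R) (amp : R -> O -> C) (T : R) (k : nat).
Hypothesis Hamp : forall a : R, \sum_(m : O) sqmod (amp a m) = 1.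
Hypothesis HT : 0 < T.
Hypothesis Hest : forall alpha : R, `|alpha| <= pi / 2 ->
     2 / 3 <= \sum_(m : O | `|est m - alpha| < T^-1) sqmod (amp alpha m).

Lemma wrong a (t : k.-tuple O) : T^-1 <= `|a| ->
  majority_neg est t != (a < 0) ->
  (k <= 2 * count (fun m => ~~ (`|est m - a| < T^-1)%R) t)%N.
Proof.
move=> Ha; rewrite /majority_neg.
have Ti : 0 < T^-1 by rewrite invr_gt0.
case: (ltrP a 0) => a0 /=.
- rewrite ltr0_norm // in Ha.
  case: ltnP => [//|H] _.
  have Hc := count_predC (fun m => (est m < 0)%R) t.
  rewrite size_tuple in Hc.
  have : (count (predC (fun m => (est m < 0)%R)) t <= count (fun m => ~~ (`|est m - a| < T^-1)%R) t)%N.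
    apply: sub_count => m /=; rewrite -leNgt => em.
    by rewrite ltr_norml negb_and -!leNgt; apply/orP; right; lra.
  lia.
- rewrite ger0_norm // in Ha.
  move=> H.
  have : (count (fun m => (est m < 0)%R) t <= count (fun m => ~~ (`|est m - a| < T^-1)%R) t)%N.
    apply: sub_count => m /= em.
    by rewrite ltr_norml negb_and -!leNgt; apply/orP; left; lra.
  lia.
Qed.

Lemma Sj_big a : T^-1 <= `|a| -> `|a| <= pi/2 -> @Sj R O est amp k a <= 4 * (17/18)^+k.
Proof.
move=> Ha Hpi; rewrite /Sj.
pose bad := fun m => ~~ (`|est m - a| < T^-1)%R.
apply: (@le_trans _ _ (\sum_(t : k.-tuple O) \prod_(m<-t) sqmod (amp a m) *
          (4 * (if (k <= 2 * count bad t)%N then 1 else 0)))).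
  apply: ler_sum => t _; rewrite sqmod_prod; apply: ler_wpM2l.
    by apply: prodr_ge0 => m _; exact: sqmod_ge0.
  rewrite sign_sq; case: eqP => [_|/eqP ne]; first by case: ifP => _; lra.
  by rewrite (wrong a t Ha ne); lra.
rewrite (eq_bigr (fun t : k.-tuple O => 4 * (if (k <= 2 * count bad t)%N then
            \prod_(m<-t) sqmod (amp a m) else 0))); last first.
  by move=> t _; case: ifP => _; lra.
rewrite -mulr_sumr -big_mkcond /=; apply: ler_wpM2l; first lra.
apply: chernoff.
- by move=> m; exact: sqmod_ge0.
- exact: Hamp.
have := Hest a Hpi; have := Hamp a.
rewrite (bigID (fun m => (`|est m - a| < T^-1)%R)) /=.
lra.
Qed.
End D.


Section E.
Variable R : realType.
Local Notation C := (R[i]).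
Variables (n : nat) (V : 'M[C]_n) (theta : 'I_n -> R).
Variables (O : finType) (est : O -> R) (amp : R -> O -> C).
Hypothesis HV : adjmx V *m V = 1%:M.

Lemma foldl_est (s : seq O) (d : 'rV[C]_n) (x : 'cV[C]_n) :
  foldl (fun w m => est_op V theta amp m *m w) (V *m diag_mx d *m x) s =
  V *m diag_mx (\row_j (\prod_(m <- s) amp (theta j) m * d 0 j)) *m x.
Proof.
elim: s d => [|m s IH] d /=.
  by congr (_ *m diag_mx _ *m _); apply/rowP => j; rewrite !mxE big_nil mul1r.
rewrite /est_op -!mulmxA (mulmxA (adjmx V)) HV mul1mx (mulmxA (diag_mx _)) mulmx_diag.
rewrite !mulmxA IH; congr (_ *m diag_mx _ *m _); apply/rowP => j.
by rewrite !mxE big_cons mulrCA mulrA.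
Qed.

Lemma est_stateE k (v : 'cV[C]_n) (t : k.-tuple O) :
  est_state V theta amp v t =
  V *m diag_mx (\row_j \prod_(m <- t) amp (theta j) m) *m (adjmx V *m v).
Proof.
have HV' : V *m adjmx V = 1%:M by apply: mulmx1C.
rewrite /est_state.
have Ev : v = V *m diag_mx (\row_(j < n) (1 : C)) *m (adjmx V *m v).
  have -> : diag_mx (\row_(j < n) (1 : C)) = 1%:M.
    by rewrite -diag_const_mx; congr diag_mx; apply/rowP => j; rewrite !mxE.
  by rewrite mulmx1 mulmxA HV' mul1mx.
rewrite {1}Ev foldl_est; congr (_ *m diag_mx _ *m _).
by apply/rowP => j; rewrite !mxE mulr1.
Qed.

Lemma err_sum k (v : 'cV[C]_n) :
  \sum_(t : k.-tuple O) vnorm2 ((if majority_neg est t then -1 else 1) *: est_state V theta amp v t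
             - est_state V theta amp (U_rotation V theta v) t)
  = \sum_j sqmod (coords V v j 0) * @Sj R O est amp k (theta j).
Proof.
rewrite /Sj.
under eq_bigr => t _ do rewrite !est_stateE.
rewrite /U_rotation /coords.
under eq_bigr => t _ do rewrite -!mulmxA (mulmxA (adjmx V)) HV mul1mx.
under eq_bigr => t _ do rewrite scalemxAr -mulmxBr (@vnorm2_iso R n V _ HV).
move: (adjmx V *m v) => x.
rewrite /vnorm2 exchange_big /=; apply: eq_bigr => j _.
rewrite mulr_sumr; apply: eq_bigr => t _.
rewrite !mul_diag_mx !mxE.
rewrite (_ : _ - _ = (\prod_(m <- t) amp (theta j) m) *
   ((if majority_neg est t then -1 else 1) - (if theta j < 0 then -1 else 1)) * x j 0).
  by rewrite !sqmodM; ring.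
move: (\prod_(m <- t) amp (theta j) m) (if majority_neg est t then -1 else 1 : C) (if theta j < 0 then -1 else 1 : C) (x j 0) => a b c d; ring.
Qed.
End E.


Section F.
Variable R : realType.
Local Notation C := (R[i]).

Lemma theta_bound n (U V : 'M[C]_n) (theta : 'I_n -> R) :
  spectral_decomp U V theta ->
  (forall alpha : R, - pi < alpha <= pi ->
     (exists2 w : 'cV[C]_n, w != 0 & U *m w = expi alpha *: w) ->
     `|alpha| <= pi / 2) ->
  forall j, `|theta j| <= pi / 2.
Proof.
case=> HV Hth HU Heig j; apply: Heig; first exact: Hth.
exists (col j V).
  apply/eqP => H0.
  have := congr1 (fun M : 'M[C]_n => M j j) HV; rewrite /= !mxE eqxx /=.
  rewrite big1 => [/eqP|i _]; first by rewrite eq_sym oner_eq0.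
  have := congr1 (fun M : 'cV[C]_n => M i 0) H0; rewrite /= !mxE => ->.
  by rewrite mulr0.
rewrite colE HU -!mulmxA (mulmxA (adjmx V)) HV mul1mx.
have -> : diag_mx (\row_k expi (theta k)) *m delta_mx j 0 =
          expi (theta j) *: (delta_mx j 0 : 'cV[C]_n).
  apply/matrixP => i l; rewrite mul_diag_mx !mxE.
  by case: eqP => [->|_]; rewrite ?mulr0 ?mulr1 //= ?andbF ?mulr0.
by rewrite scalemxAr.
Qed.
End F.


Section G.
Variable R : realType.
Local Notation C := (R[i]).

Lemma term_le_sum (I : finType) (F : I -> R) (P : pred I) i :
  (forall j, P j -> 0 <= F j) -> P i -> F i <= \sum_(j | P j) F j.
Proof.
move=> F0 Pi; rewrite (bigD1 i) //= lerDl; apply: sumr_ge0 => j /andP [Pj _]; exact: F0.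
Qed.

Lemma tail_le n (V : 'M[C]_n) (theta : 'I_n -> R) (v : 'cV[C]_n) (eps T : R) :
  0 < eps < 1 -> 0 < T -> QHT V theta v eps <= T ->
  \sum_(k < n | (theta k != 0) && (T < `|theta k|^-1)) sqmod (coords V v k 0) <= eps.
Proof.
move=> /andP [e0 e1] T0 HQ.
pose E := [set y : R | QH_tail V theta v y <= eps]%classic.
have E0 : forall y, E y -> 0 <= y.
  move=> y; rewrite /E /= /QH_tail; case: ltP => // _; lra.
have hinf : has_inf E.
  split; last by exists 0 => y /E0.
  exists (\sum_k `|theta k|^-1).
  have s0 : 0 <= \sum_k `|theta k|^-1 by apply: sumr_ge0 => k _; rewrite invr_ge0.
  rewrite /E /= /QH_tail ltNge s0 /= big1; first lra.
  move=> k /andP [_ H]; exfalso; move: H; apply/negP; rewrite -leNgt.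
  by rewrite (bigD1 k) //= lerDl; apply: sumr_ge0 => j _; rewrite invr_ge0.
pose A := fun k => (theta k != 0) && (T < `|theta k|^-1).
pose S := \sum_(k | A k) (`|theta k|^-1 - T)^-1.
have S0 : 0 <= S by apply: sumr_ge0 => k /andP [_ H]; rewrite invr_ge0 subr_ge0 ltW.
pose d := (1 + S)^-1.
have d0 : 0 < d by rewrite invr_gt0; lra.
have [y Ey Hy] := inf_adherent d0 hinf.
have y0 := E0 y Ey.
apply: (le_trans _ (Ey : QH_tail V theta v y <= eps)).
rewrite /QH_tail ltNge y0 /=.
apply: sum_sub => [k|k /andP [t0 Tk]]; first exact: sqmod_ge0.
rewrite t0 /=.
have dk : d <= `|theta k|^-1 - T.
  rewrite /d -[X in _ <= X]invrK lef_pV2 ?posrE ?invr_gt0 ?subr_gt0 //; last lra.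
  have : (`|theta k|^-1 - T)^-1 <= S.
    apply: (@term_le_sum _ (fun k => (`|theta k|^-1 - T)^-1) A k) => [j|]; last by rewrite /A t0 Tk.
    by case/andP => _ H; rewrite invr_ge0 subr_ge0 ltW.
  lra.
rewrite /QHT in HQ; lra.
Qed.
End G.


Section I.
Variable R : realType.
Local Notation C := (R[i]).

Lemma norm_coords n (V : 'M[C]_n) (phi0 mu : 'cV[R]_n) :
  adjmx V *m V = 1%:M ->
  \sum_(i < n) phi0 i 0 ^+ 2 = 1 -> \sum_(i < n) mu i 0 ^+ 2 = 1 ->
  \sum_j sqmod (coords V (cmx (phi_tilde phi0 mu)) j 0) <= 1.
Proof.
move=> HV Hp Hm.
have HV' : adjmx (adjmx V) *m adjmx V = 1%:M by rewrite adjmxK; apply: mulmx1C.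
rewrite -/(vnorm2 _) /coords (@vnorm2_iso R n (adjmx V) _ HV') /vnorm2.
pose a := \sum_i mu i 0 * phi0 i 0.
have -> : \sum_i sqmod (cmx (phi_tilde phi0 mu) i 0) =
   \sum_i (phi0 i 0 ^+ 2 - 2 * a * (mu i 0 * phi0 i 0) + a ^+ 2 * mu i 0 ^+ 2).
  apply: eq_bigr => i _; rewrite /cmx /phi_tilde !mxE /sqmod /rc /=.
  rewrite (_ : \sum_(j < n) mu^T 0 j * phi0 j 0 = a); first by clearbody a; ring.
  by apply: eq_bigr => j _; rewrite mxE.
rewrite !big_split /= -!mulr_sumr Hp Hm -/a.
rewrite sumrN -mulr_sumr -/a expr2; have := sqr_ge0 a; rewrite expr2; clearbody a; lra.
Qed.

Lemma eps_bound (eps : R) : 0 < eps < 1 ->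
  (17/18 : R) ^+ (Num.truncn ((ln (18/17 : R))^-1 * ln eps^-1)) <= 18/17 * eps.
Proof.
move=> /andP [e0 e1].
set b := (18/17 : R).
have b1 : 1 < b by rewrite /b; lra.
have lb : 0 < ln b by apply: ln_gt0.
set k := Num.truncn _.
have Hk := truncnS_gt ((ln b)^-1 * ln eps^-1).
rewrite -/k in Hk; clearbody k.
have H1 : ln eps^-1 <= ln (b ^+ k.+1).
  rewrite lnXn; last lra.
  rewrite -mulr_natr; apply: ltW.
  rewrite mulrC -ltr_pdivrMr // mulrC //.
have H2 : eps^-1 <= b ^+ k.+1.
  by move: H1; rewrite ler_ln // posrE ?invr_gt0 ?exprn_gt0 //; lra.
have -> : (17/18 : R) = b^-1 by rewrite /b; field.
rewrite exprVn -div1r.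
have bk : 0 < b ^+ k by apply: exprn_gt0; lra.
rewrite exprS -div1r ler_pdivrMr // in H2.
rewrite ler_pdivrMr //.
by rewrite mulrAC.
Qed.
End I.


Theorem theorem7 (R : realType) (cE : R) :
  0 <= cE ->
  exists kappa : R, 0 < kappa /\
  exists Cst : R,
  forall (n : nat) (U2 : 'M[R]_n) (phi0 mu : 'cV[R]_n) (eps T : R)
         (V : 'M[R[i]]_n) (theta : 'I_n -> R)
         (O : finType) (est : O -> R) (amp : R -> O -> R[i]) (calls : nat),
  (* U2 unitary with real entries *)
  U2^T *m U2 = 1%:M ->
  (* phi0: real unit eigenvector of eigenvalue 1, unique up to scalars *)
  U2 *m phi0 = phi0 ->
  \sum_(i < n) phi0 i 0 ^+ 2 = 1 ->
  (forall v : 'cV[R[i]]_n, cmx U2 *m v = v -> exists a : R[i], v = a *: cmx phi0) ->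
  (* mu: real unit vector *)
  \sum_(i < n) mu i 0 ^+ 2 = 1 ->
  0 < eps < 1 ->
  let U := cmx (U2 *m householder mu) in
  let phit := cmx (phi_tilde phi0 mu) in
  (* all eigenvalues e^{i alpha} of U satisfy |alpha| <= pi/2 *)
  (forall alpha : R, - pi < alpha <= pi ->
     (exists2 w : 'cV[R[i]]_n, w != 0 & U *m w = expi alpha *: w) ->
     `|alpha| <= pi / 2) ->
  (* an eigendecomposition of U *)
  spectral_decomp U V theta ->
  (* T >= QHT_eps(U2, mu) *)
  0 < T ->
  QHT V theta phit eps <= T ->
  (* Estimate with precision Delta = 1/T: outcome set O, estimated phases est,
     amplitudes amp(alpha, .) on an eigenvector of eigenphase alpha *)
  (forall alpha : R, \sum_(m : O) sqmod (amp alpha m) = 1) ->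
  (forall alpha : R, `|alpha| <= pi / 2 ->
     2 / 3 <= \sum_(m : O | `|est m - alpha| < T^-1) sqmod (amp alpha m)) ->
  (forall m : O, est m != 0 -> amp 0 m = 0) ->
  calls%:R <= cE * T ->
  (* Rotate(U, 1/T, eps) with k = floor(kappa * log(1/eps)) repetitions *)
  let k := Num.truncn (kappa * ln eps^-1) in
  rotate_error V theta est amp k phit (U_rotation V theta phit) <= Cst * Num.sqrt eps /\
  (rotate_calls k calls)%:R <= Cst * ln eps^-1 * T.
Proof.
move=> cE0.
have lb : 0 < ln (18/17 : R) by apply: ln_gt0; lra.
exists (ln (18/17 : R))^-1; split; first by rewrite invr_gt0.
set kappa := (ln (18/17 : R))^-1.
have ka0 : 0 < kappa by rewrite invr_gt0.
exists (3 + 2 * kappa * cE).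
move=> n U2 phi0 mu eps T V theta O est amp calls HU2 Hphi Hphi1 Huniq Hmu Heps U phit
  Heig Hsp HT HQ Hamp Hest Hamp0 Hcalls k.
have /andP [e0 e1] := Heps.
have le0 : 0 < ln eps^-1 by apply: ln_gt0; rewrite invf_gt1.
have kle : k%:R <= kappa * ln eps^-1.
  by rewrite /k truncn_le; apply: mulr_ge0; apply: ltW.
have k0 : 0 <= k%:R :> R by [].
have c0 : 0 <= calls%:R :> R by [].
split; last first.
  rewrite /rotate_calls !natrM.
  have : (2%:R * k%:R * calls%:R : R) <= 2 * (kappa * ln eps^-1) * (cE * T).
    apply: ler_pM; rewrite ?mulr_ge0 //; last by apply: ler_wpM2l.
  have : 0 <= ln eps^-1 * T by apply: mulr_ge0; apply: ltW.
  clearbody kappa k; nra.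
have HV1 : adjmx V *m V = 1%:M by case: Hsp.
have Hth := @theta_bound R n U V theta Hsp Heig.
have Hq : (17/18 : R) ^+ k <= 18/17 * eps := @eps_bound R eps Heps.
clearbody k.
have Htail := @tail_le R n V theta phit eps T Heps HT HQ.
have Hnorm := @norm_coords R n V phi0 mu HV1 Hphi1 Hmu.
rewrite -/phit in Hnorm.
pose A := fun j => (theta j != 0) && (T < `|theta j|^-1).
rewrite (bigID A) /= in Hnorm.
have q0 : 0 <= (17/18 : R) ^+ k by apply: exprn_ge0; lra.
have HS : \sum_(t : k.-tuple O) vnorm2 ((if majority_neg est t then -1 else 1) *: est_state V theta amp phit t
             - est_state V theta amp (U_rotation V theta phit) t) <= 9 * eps.
  rewrite (@err_sum R n V theta O est amp HV1 k phit).
  rewrite (bigID A) /=.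
  have P1 : \sum_(j | A j) sqmod (coords V phit j 0) * Sj R O est amp k (theta j) <= 4 * eps.
    apply: (@le_trans _ _ (\sum_(j | A j) sqmod (coords V phit j 0) * 4)).
      apply: ler_sum => j _; apply: ler_wpM2l; first exact: sqmod_ge0.
      exact: Sj_le4.
    rewrite -mulr_suml; lra.
  have P2 : \sum_(j | ~~ A j) sqmod (coords V phit j 0) * Sj R O est amp k (theta j)
             <= 4 * (17/18 : R) ^+ k.
    apply: (@le_trans _ _ (\sum_(j | ~~ A j) sqmod (coords V phit j 0) * (4 * (17/18 : R) ^+ k))).
      apply: ler_sum => j HA; apply: ler_wpM2l; first exact: sqmod_ge0.
      case: (eqVneq (theta j) 0) => [->|t0]; first by rewrite Sj_0 //; lra.
      apply: (@Sj_big R O est amp T k Hamp HT Hest) => //.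
      move: HA; rewrite /A t0 /= -leNgt => HA.
      have tp : 0 < `|theta j| by rewrite normr_gt0.
      rewrite -[X in _ <= X]invrK lef_pV2 ?posrE ?invr_gt0 //.
    rewrite -mulr_suml.
    have : 0 <= \sum_(j | A j) sqmod (coords V phit j 0) by apply: sumr_ge0 => j _; exact: sqmod_ge0.
    move=> s1.
    rewrite -[X in _ <= X]mul1r; apply: ler_wpM2r; first by apply: mulr_ge0.
    lra.
  set q := (17/18 : R) ^+ k in Hq q0 P2; clearbody q; lra.
rewrite /rotate_error.
apply: (@le_trans _ _ (Num.sqrt (9 * eps))); first by rewrite ler_sqrt //; lra.
rewrite sqrtrM; last lra.
have -> : Num.sqrt 9 = 3 :> R.
  by rewrite (_ : 9 = 3 ^+ 2 :> R) ?sqrtr_sqr ?ger0_norm //; rewrite expr2; lra.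
apply: ler_wpM2r; first exact: sqrtr_ge0.
have : 0 <= kappa * cE by apply: mulr_ge0 => //; apply: ltW.
lra.
Qed.
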